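(* Let $\mathbb{V}$ and $\mathbb{V}'$ be varieties with the same signature $\mathcal{F}$ and defining sets of identities $\Sigma\subseteq\Sigma'$ respectively, and suppose $\mathbb{V}$ is BIT speciale. Then any set of ideal terms determining ideals in $\mathbb{V}$ determines ideals in $\mathbb{V}'$ too.
   Context: BIT speciale: the algebraic theory of $\mathbb{V}$ contains a constant $0$ and, for some $n\ge1$, binary terms $\alpha_1,\dots,\alpha_n$ and an $(n+1)$-ary term $\theta$ such that $\alpha_i(x,x)=0$ and $\theta(\alpha_1(x,y),\dots,\alpha_n(x,y),y)=x$ are identities of $\mathbb{V}$. For a variety $\mathbb{W}$ with signature $\mathcal{F}$: an ideal term of $\mathbb{W}$ in the variables $y_1,\dots,y_p$ is a term $t(x_1,\dots,x_m,y_1,\dots,y_p)$ with $t(x_1,\dots,x_m,0,\dots,0)=0$ an identity of $\mathbb{W}$; a non-empty subset $H$ of a $\mathbb{W}$-algebra $A$ is an ideal if $t(a_1,\dots,a_m,b_1,\dots,b_p)\in H$ for every ideal term $t$, all $a_r\in A$, $b_s\in H$. A set $T$ of ideal terms determines ideals in $\mathbb{W}$ if for every $\mathbb{W}$-algebra $A$, a non-empty $H\subseteq A$ is an ideal iff every $t\in T$ takes values in $H$ whenever its $x$-variables are assigned elements of $A$ and its $y$-variables elements of $H$. *)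

(* Defs.v *)
From mathcomp Require Import all_boot.
Set Implicit Arguments.
Unset Strict Implicit.
Unset Printing Implicit Defensive.

Record signature := Signature { op : Type; arity : op -> nat }.

Inductive term (F : signature) (V : Type) : Type :=
| Var : V -> term F V
| App : forall f : op F, ('I_(arity f) -> term F V) -> term F V.
Arguments Var {F V}.
Arguments App {F V}.

Record algebra (F : signature) := Algebra {
  carrier :> Type;
  interp : forall f : op F, ('I_(arity f) -> carrier) -> carrier }.

Fixpoint eval (F : signature) (A : algebra F) (V : Type) (v : V -> A)
  (t : term F V) : A :=
  match t with
  | Var x => v x
  | App f args => @interp F A f (fun i => eval v (args i))
  end.

Fixpoint subst (F : signature) (V W : Type) (s : V -> term F W)
  (t : term F V) : term F W :=
  match t with
  | Var x => s x
  | App f args => App f (fun i => subst s (args i))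
  end.

Definition identities (F : signature) := term F nat -> term F nat -> Prop.

Definition model (F : signature) (Sigma : identities F) (A : algebra F) : Prop :=
  forall s t, Sigma s t -> forall v : nat -> A, eval v s = eval v t.

Definition holds (F : signature) (Sigma : identities F) (V : Type)
  (s t : term F V) : Prop :=
  forall A : algebra F, model Sigma A -> forall v : V -> A, eval v s = eval v t.

(* Constants of the algebraic theory: closed terms (no variables). *)
Definition cterm (F : signature) := term F Empty_set.
Definition const (F : signature) (V : Type) (c : cterm F) : term F V :=
  subst (fun e : Empty_set => match e with end) c.

(* BIT speciale, with the data (0, n, alpha_1..alpha_n, theta) explicit.
   alpha_i are binary terms in variables x = true, y = false;
   theta is (n+1)-ary in variables Some i (i < n) and None (last, = y). *)
Definition BIT_speciale_data (F : signature) (Sigma : identities F)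
  (zero : cterm F) (n : nat) (alpha : 'I_n -> term F bool)
  (theta : term F (option 'I_n)) : Prop :=
  (1 <= n)%N /\
  (forall i, holds Sigma (subst (fun _ => Var tt) (alpha i)) (const unit zero)) /\
  holds Sigma
    (subst (fun o => match o with Some i => alpha i | None => Var false end) theta)
    (Var true).

Definition BIT_speciale (F : signature) (Sigma : identities F) : Prop :=
  exists zero n alpha theta, @BIT_speciale_data F Sigma zero n alpha theta.

(* Terms t(x_1,...,x_m, y_1,...,y_p): variables inl i are x's, inr j are y's. *)
Definition xyterm (F : signature) := term F (nat + nat).

Definition ideal_term (F : signature) (Sigma : identities F) (zero : cterm F)
  (t : xyterm F) : Prop :=
  holds Sigma
    (subst (fun v : nat + nat =>
       match v with inl i => Var i | inr _ => const nat zero end) t)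
    (const nat zero).

Definition xyval (A : Type) (a b : nat -> A) (v : nat + nat) : A :=
  match v with inl i => a i | inr j => b j end.

Definition closed_under (F : signature) (A : algebra F) (H : A -> Prop)
  (t : xyterm F) : Prop :=
  forall a b : nat -> A, (forall j, H (b j)) -> H (eval (xyval a b) t).

Definition is_ideal (F : signature) (Sigma : identities F) (zero : cterm F)
  (A : algebra F) (H : A -> Prop) : Prop :=
  (exists a, H a) /\
  forall t, ideal_term Sigma zero t -> closed_under H t.

Definition determines_ideals (F : signature) (Sigma : identities F)
  (zero : cterm F) (T : xyterm F -> Prop) : Prop :=
  (forall t, T t -> ideal_term Sigma zero t) /\
  forall A : algebra F, model Sigma A ->
    forall H : A -> Prop, (exists a, H a) ->
      (is_ideal Sigma zero H <-> forall t, T t -> closed_under H t).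

(* Main.v *)
Require Import Defs.
From mathcomp Require Import all_boot.
From Stdlib Require Import FunctionalExtensionality.

Lemma eval_subst (F : signature) (A : algebra F) (V W : Type) (v : W -> A)
  (s : V -> term F W) (t : term F V) :
  eval v (subst s t) = eval (fun x => eval v (s x)) t.
Proof.
elim: t => [x|f args IH] //=.
by congr (interp _); apply: functional_extensionality => i; apply: IH.
Qed.

Lemma eval_ext (F : signature) (A : algebra F) (V : Type) (v w : V -> A)
  (t : term F V) : (forall x, v x = w x) -> eval v t = eval w t.
Proof. by move=> H; have -> : v = w by apply: functional_extensionality. Qed.

Definition ev0 {F : signature} {A : algebra F} (c : cterm F) : A :=
  eval (fun e : Empty_set => match e with end) c.

Lemma eval_const (F : signature) (A : algebra F) (V : Type) (v : V -> A)
  (c : cterm F) : eval v (const V c) = ev0 (A:=A) c.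
Proof. by rewrite /const eval_subst; apply: eval_ext => -[]. Qed.

Lemma holds_sub (F : signature) (Sigma Sigma' : identities F)
  (Hsub : forall s t, Sigma s t -> Sigma' s t) V (s t : term F V) :
  holds Sigma s t -> holds Sigma' s t.
Proof.
move=> H A HA v; apply: H => s' t' Hst w; exact: HA (Hsub _ _ Hst) w.
Qed.

Theorem corollary2p10 (F : signature) (Sigma Sigma' : identities F)
  (Hsub : forall s t, Sigma s t -> Sigma' s t)
  (zero : cterm F) (n : nat) (alpha : 'I_n -> term F bool)
  (theta : term F (option 'I_n))
  (HBIT : BIT_speciale_data Sigma zero alpha theta)
  (T : xyterm F -> Prop) :
  determines_ideals Sigma zero T -> determines_ideals Sigma' zero T.
Proof.
case: HBIT => _ [Ha Ht].
have modS : forall A, model Sigma' A -> model Sigma A.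
  by move=> A HA s t Hst; apply: HA; apply: Hsub.
have idS : forall t, ideal_term Sigma zero t -> ideal_term Sigma' zero t.
  by move=> t; apply: holds_sub.
have Ha' : forall (A : algebra F), model Sigma A -> forall (c : A) i,
    eval (fun _ : bool => c) (alpha i) = ev0 (A:=A) zero.
  move=> A HA c i; have := Ha i A HA (fun _ => c).
  by rewrite eval_subst eval_const.
have Ht' : forall (A : algebra F), model Sigma A -> forall (v : bool -> A),
    eval (fun o => match o with Some i => eval v (alpha i) | None => v false end)
      theta = v true.
  move=> A HA v; have := Ht A HA v; rewrite eval_subst /= => <-.
  by apply: eval_ext => -[i|].
move=> [HT Hdet]; split; first by move=> t /HT; apply: idS.
move=> A HA H Hne; split.
  by move=> [_ Hcl] t /HT /idS; apply: Hcl.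
move=> HclT.
have [_ HidS] := (Hdet A (modS A HA) H Hne).2 HclT.
split=> // t Hid a b Hb.
pose t0 : xyterm F := subst (fun v : nat + nat =>
   match v with inl i => Var (inl i) | inr _ => const (nat + nat) zero end) t.
pose u : xyterm F := subst (fun o => match o with
   | Some i => subst (fun bb : bool => if bb then t else t0) (alpha i)
   | None => const (nat + nat) zero end) theta.
have Hu : ideal_term Sigma zero u.
  move=> B HB v; rewrite eval_const !eval_subst.
  set c := eval (fun x : nat + nat => eval v (match x with inl i => Var i
                                          | inr _ => const nat zero end)) t.
  transitivity (eval (fun o : option 'I_n => ev0 (A:=B) zero) theta).
    apply: eval_ext => -[i|]; last by rewrite eval_const.
    rewrite eval_subst -(Ha' B HB c i); apply: eval_ext => -[]//.
    rewrite /t0 eval_subst /c; apply: eval_ext => -[i'|j] //=.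
    by rewrite !eval_const.
  apply: eq_trans (Ht' B HB (fun _ => ev0 (A:=B) zero)).
  by apply: eval_ext => -[i|] //=; rewrite Ha'.
have := HidS u Hu a b Hb.
have Ht0 : eval (xyval a b) t0 = ev0 (A:=A) zero.
  have := Hid A HA a; rewrite eval_const => <-.
  rewrite /t0 !eval_subst; apply: eval_ext => -[i|j] //=.
  by rewrite !eval_const.
suff -> : eval (xyval a b) u = eval (xyval a b) t by [].
rewrite /u eval_subst.
apply: eq_trans (Ht' A (modS A HA) (fun bb => if bb then eval (xyval a b) t
                                       else ev0 (A:=A) zero)).
apply: eval_ext => -[i|] /=; last by rewrite eval_const.
by rewrite eval_subst; apply: eval_ext => -[].
Qed.
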